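(* Let $\mathcal{C}$ be a clutter and let $f\neq 0$ be a homogeneous binomial in $I(X)$ of the form $f=t_i^b-t^c$ with $b\in\mathbb{N}$, $c\in\mathbb{N}^s$ and $i\notin\mathrm{supp}(c)$. Then (a) $\deg(f)\geq q-1$; and (b) if $\deg(f)=q-1$, then $f=t_i^{q-1}-t_j^{q-1}$ for some $j\neq i$.
   Context: Let $K=\mathbb{F}_q$ be a finite field with $q\neq 2$ elements. A clutter $\mathcal{C}$ with vertex set $\{y_1,\ldots,y_n\}$ is a family of subsets (edges) of this set such that no edge is contained in another; let its edges be $f_1,\ldots,f_s$ ($s\geq 2$) with characteristic vectors $v_i=\sum_{y_j\in f_i}e_j\in\{0,1\}^n$ (these are pairwise distinct). For $x\in K^n$ write $x^{v_i}=\prod_j x_j^{v_{ij}}$. Let $X=\{[(x^{v_1},\ldots,x^{v_s})]\in\mathbb{P}^{s-1}: x\in (K^* )^n\}$, let $S=K[t_1,\ldots,t_s]$ with the standard grading, and let $I(X)$ be the ideal of $S$ generated by the homogeneous polynomials vanishing on $X$. For $c\in\mathbb{N}^s$, $t^c=t_1^{c_1}\cdots t_s^{c_s}$ and $\mathrm{supp}(c)=\{k: c_k\neq 0\}$. *)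

(* Defs.v *)
From HB Require Import structures.
From mathcomp Require Import all_boot all_order all_algebra all_field.
Set Implicit Arguments. Unset Strict Implicit. Unset Printing Implicit Defensive.
Import GRing.Theory.
Local Open Scope ring_scope.

(* A clutter on vertex set {y_0,...,y_(n-1)} with edges E 0, ..., E (s-1):
   no edge is contained in a different one (this forces distinct edges). *)
Definition is_clutter (n s : nat) (E : 'I_s -> {set 'I_n}) : Prop :=
  forall k l : 'I_s, k != l -> ~~ (E k \subset E l).

(* x^{v_k} = prod_{y_j in f_k} x_j, v_k the characteristic vector of edge E k *)
Definition edge_mon (K : fieldType) (n s : nat) (E : 'I_s -> {set 'I_n})
  (x : 'I_n -> K) (k : 'I_s) : K := \prod_(j in E k) x j.

Definition eval_mon (K : fieldType) (s : nat) (c : {ffun 'I_s -> nat})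
  (P : 'I_s -> K) : K := \prod_(k < s) P k ^+ c k.

Definition pure_exp (s : nat) (i : 'I_s) (b : nat) : {ffun 'I_s -> nat} :=
  [ffun k => if k == i then b else 0%N].

(* the binomial t^a - t^c vanishes at every point of X, i.e. at all
   (x^{v_1},...,x^{v_s}) with x in (K^x)^n (nonzero entries) (for homogeneous binomials this is
   membership in I(X)) *)
Definition binom_vanishes_on_X (K : fieldType) (n s : nat)
  (E : 'I_s -> {set 'I_n}) (a c : {ffun 'I_s -> nat}) : Prop :=
  forall x : 'I_n -> K, (forall j, x j != 0) ->
    eval_mon a (edge_mon E x) = eval_mon c (edge_mon E x).

Definition mdeg (s : nat) (c : {ffun 'I_s -> nat}) : nat := (\sum_(k < s) c k)%N.

(* Main.v *)
Require Import Defs.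
From HB Require Import structures.
From mathcomp Require Import all_boot all_order all_algebra all_field.
Import GRing.Theory.
Local Open Scope ring_scope.
Set Implicit Arguments.
Unset Strict Implicit.

Lemma roots_bound (K : finFieldType) (d : nat) : (0 < d)%N ->
  (forall x : K, x != 0 -> x ^+ d = 1) -> (#|K|.-1 <= d)%N.
Proof.
move=> d0 H.
have p0 : ('X^d - (1:K)%:P) != 0.
  by rewrite -size_poly_eq0 size_XnsubC.
have := max_poly_roots p0 (rs := enum (predC1 (0:K))).
rewrite size_XnsubC // -cardE cardC1 ltnS; apply.
  apply/allP => x; rewrite mem_enum /= => hx.
  by rewrite /root !hornerE H // subrr.
exact: enum_uniq.
Qed.

Lemma expf_cardm1 (K : finFieldType) (x : K) : x != 0 -> x ^+ #|K|.-1 = 1.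
Proof.
move=> x0; apply: (mulfI x0); rewrite mulr1 -exprS prednK ?expf_card //.
by apply/card_gt0P; exists 0.
Qed.

Lemma edge_mon_pt (K : fieldType) (n s : nat) (E : 'I_s -> {set 'I_n})
  (m : 'I_n) (be : K) (k : 'I_s) :
  edge_mon E (fun j => if j == m then be else 1) k = if m \in E k then be else 1.
Proof.
rewrite /edge_mon -big_mkcondr /=.
case: ifP => hm.
  rewrite (eq_bigl (pred1 m)) ?big_pred1_eq // => j /=.
  by case: eqP => [->|]; rewrite ?hm ?andbF ?andbT.
rewrite big_pred0 // => j /=; case: eqP => [->|]; by rewrite ?hm ?andbF.
Qed.

Lemma eval_pure (K : fieldType) (s : nat) (i : 'I_s) b (P : 'I_s -> K) :
  eval_mon (pure_exp i b) P = P i ^+ b.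
Proof.
rewrite /eval_mon (bigD1 i) //= ffunE eqxx big1 ?mulr1 // => k /negPf hk.
by rewrite ffunE hk expr0.
Qed.

Lemma mdeg_pure s (i : 'I_s) b : mdeg (pure_exp i b) = b.
Proof.
rewrite /mdeg (bigD1 i) //= ffunE eqxx big1 ?addn0 // => k /negPf hk.
by rewrite ffunE hk.
Qed.

Definition dm {n s : nat} (E : 'I_s -> {set 'I_n}) (c : {ffun 'I_s -> nat}) m :=
  (\sum_(k < s) (if m \in E k then c k else 0))%N.

Lemma eval_c_pt (K : fieldType) (n s : nat) (E : 'I_s -> {set 'I_n})
  (c : {ffun 'I_s -> nat}) (m : 'I_n) (be : K) :
  eval_mon c (edge_mon E (fun j => if j == m then be else 1)) = be ^+ dm E c m.
Proof.
rewrite /eval_mon /dm -prodrXr; apply: eq_bigr => k _.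
by rewrite edge_mon_pt; case: ifP; rewrite ?expr1n ?expr0.
Qed.

Lemma dm_le n s (E : 'I_s -> {set 'I_n}) (c : {ffun 'I_s -> nat}) m : (dm E c m <= mdeg c)%N.
Proof. by apply: leq_sum => k _; case: ifP. Qed.

Lemma dm_ge n s (E : 'I_s -> {set 'I_n}) (c : {ffun 'I_s -> nat}) m k : m \in E k -> (c k <= dm E c m)%N.
Proof.
move=> hk; rewrite /dm (bigD1 k) //= hk; exact: leq_addr.
Qed.

Lemma dm_lt n s (E : 'I_s -> {set 'I_n}) (c : {ffun 'I_s -> nat}) m l : m \notin E l ->
  (dm E c m + c l <= mdeg c)%N.
Proof.
move=> hl.
have -> : mdeg c = (dm E c m + \sum_(k < s) (if m \in E k then 0 else c k))%N.
  rewrite /dm /mdeg -big_split; apply: eq_bigr => k _ /=; case: (m \in E k); by rewrite ?addn0 ?add0n.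
rewrite leq_add2l => //; rewrite (bigD1 l) //= (negPf hl); exact: leq_addr.
Qed.

Lemma key (K : finFieldType) (n s : nat) (E : 'I_s -> {set 'I_n})
  (i : 'I_s) (b : nat) (c : {ffun 'I_s -> nat})
  (hI : binom_vanishes_on_X K E (pure_exp i b) c) m (be : K) : be != 0 ->
  (if m \in E i then be else 1) ^+ b = be ^+ dm E c m.
Proof.
move=> b0; have := hI (fun j => if j == m then be else 1).
rewrite eval_pure eval_c_pt edge_mon_pt; apply => j; case: ifP => //.
by rewrite oner_eq0.
Qed.

Theorem lemma3p4 (K : finFieldType) (n s : nat) (E : 'I_s -> {set 'I_n})
  (hq : #|K| != 2%N) (hs : (2 <= s)%N) (hC : is_clutter E)
  (i : 'I_s) (b : nat) (c : {ffun 'I_s -> nat})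
  (hsupp : c i = 0%N)
  (hhom : mdeg (pure_exp i b) = mdeg c)
  (hnz : pure_exp i b != c)
  (hI : binom_vanishes_on_X K E (pure_exp i b) c) :
  (#|K|.-1 <= mdeg (pure_exp i b))%N /\
  (mdeg (pure_exp i b) = #|K|.-1 ->
     b = #|K|.-1 /\ exists j : 'I_s, j != i /\ c = pure_exp j #|K|.-1).
Proof.
rewrite mdeg_pure in hhom *.
have [j cj] : exists j, (0 < c j)%N.
  apply/existsP; apply: contraR hnz => /existsPn h0.
  have c0 : forall k, c k = 0%N by move=> k; move: (h0 k); case: (c k).
  have b0 : b = 0%N by rewrite hhom /mdeg big1.
  by apply/eqP/ffunP => k; rewrite ffunE c0 b0; case: ifP.
have ji : j != i by apply: contraTneq cj => ->; rewrite hsupp.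
have partA : (#|K|.-1 <= b)%N.
  have /subsetPn [m mj mi] := hC j i ji.
  have dpos : (0 < dm E c m)%N := leq_trans cj (dm_ge c mj).
  apply: leq_trans (roots_bound dpos _) _.
    by move=> x x0; rewrite -(key hI m x0) (negPf mi) expr1n.
  by rewrite hhom dm_le.
split=> // hb; split=> //; exists j; split=> //.
have hd : forall m, dm E c m = 0%N \/ dm E c m = b.
  move=> m; case: (posnP (dm E c m)) => [|dpos]; [by left|right].
  apply/eqP; rewrite eqn_leq hhom dm_le /= -hhom hb.
  apply: roots_bound => // x x0; rewrite -(key hI m x0).
  by case: ifP => _; rewrite ?expr1n // hb expf_cardm1.
have cl : forall l, l != j -> c l = 0%N.
  move=> l lj; apply/eqP; rewrite -leqn0; apply: contraT; rewrite -ltnNge => cl.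
  have jl : j != l by rewrite eq_sym.
  have /subsetPn [m mj ml] := hC j l jl.
  have dpos : (0 < dm E c m)%N := leq_trans cj (dm_ge c mj).
  have db : dm E c m = b by case: (hd m) => // h; rewrite h in dpos.
  have := dm_lt c ml; rewrite db hhom -{2}(addn0 (mdeg c)) leq_add2l leqn0.
  by move/eqP=> h; rewrite h in cl.
have cjb : c j = b.
  by rewrite hhom /mdeg (bigD1 j) //= big1 ?addn0 // => k; exact: cl.
apply/ffunP => k; rewrite ffunE.
case: eqP => [->|/eqP kj]; first by rewrite cjb hb.
exact: cl.
Qed.
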